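(* Let $C([0,1])$ be the space of continuous real functions on $[0,1]$ with the norm $\|f\|_\infty = \sup_{t\in[0,1]}|f(t)|$ and its Borel $\sigma$-algebra $\mathcal{A}$ (for the norm topology). Let $\{X_{Q,\mathbf{d}} : \Omega \to C([0,1]) \mid \mathbf{d}\in D^n\}$ be a family of measurable maps. For $k\ge1$ and $0\le t_1<\cdots<t_k\le1$ let $\pi_{t_1,\dots,t_k}: C([0,1]) \to \mathbb{R}^k$, $f \mapsto (f(t_1),\dots,f(t_k))$, and $X^{t_1,\dots,t_k}_{Q,\mathbf{d}} = \pi_{t_1,\dots,t_k}\circ X_{Q,\mathbf{d}}$. Let $\epsilon\ge0$, $0\le\delta\le1$. Suppose that for every $k$ and every $t_1<\dots<t_k$ in $[0,1]$, $$\mathbb{P}(X^{t_1,\dots,t_k}_{Q,\mathbf{d}}\in B) \le e^\epsilon\, \mathbb{P}(X^{t_1,\dots,t_k}_{Q,\mathbf{d}'}\in B) + \delta$$ for all $\mathbf{d}\sim\mathbf{d}'$ in $D^n$ and all Borel sets $B\subseteq\mathbb{R}^k$. Then $\mathbb{P}(X_{Q,\mathbf{d}}\in A)\le e^\epsilon\,\mathbb{P}(X_{Q,\mathbf{d}'}\in A)+\delta$ for all $\mathbf{d}\sim\mathbf{d}'$ in $D^n$ and all $A\in\mathcal{A}$.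
   Context: $(U,\rho)$ is a metric space, $D\subseteq U$, $n\ge1$, and $(\Omega,\mathcal{F},\mathbb{P})$ is a probability space. Two databases $\mathbf{d}=(d_1,\dots,d_n), \mathbf{d}'=(d_1',\dots,d_n') \in D^n$ are neighbours, written $\mathbf{d}\sim\mathbf{d}'$, if there is exactly one index $j$ with $d_j \ne d_j'$ (and $d_i = d_i'$ for all $i\ne j$); the relation is symmetric. *)

(* Defs.v *)
From HB Require Import structures.
From mathcomp Require Import all_boot all_order all_algebra.
From mathcomp Require Import all_classical all_reals all_analysis.
Set Implicit Arguments. Unset Strict Implicit. Unset Printing Implicit Defensive.
Import Order.TTheory GRing.Theory Num.Theory.
Import numFieldNormedType.Exports.
Local Open Scope classical_set_scope.
Local Open Scope ring_scope.

(* The space C([0,1]) is represented by the set [C01] of functions R -> R that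
   are continuous on [0,1] and constant outside [0,1] (f t = f (clamp t)),
   which is in canonical bijection with C([0,1]) by restriction. *)
Definition clamp01 {R : realType} (t : R) : R := Num.min 1 (Num.max 0 t).

Definition C01 {R : realType} : set (R -> R) :=
  [set f | {within `[0 : R, 1], continuous f} /\ forall t, f t = f (clamp01 t)].

Definition supdist {R : realType} (f g : R -> R) : R :=
  sup [set `|f t - g t| | t in `[0 : R, 1]].

Definition C01_open {R : realType} : set (set (R -> R)) :=
  [set A | A `<=` C01 /\
     forall f, A f -> exists2 e : R, 0 < e &
        forall g, C01 g -> supdist f g < e -> A g].

Definition C01_borel {R : realType} : set (set (R -> R)) :=
  <<s C01, C01_open >>.

Definition Rk_borel {R : realType} (k : nat) : set (set 'rV[R]_k) :=
  <<s [set A : set 'rV[R]_k | open A] >>.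

Definition proj_at {R : realType} (k : nat) (t : 'I_k -> R) (f : R -> R)
  : 'rV[R]_k := \row_i f (t i).

Definition neighbours {U : Type} (n : nat) (d d' : 'I_n -> U) : Prop :=
  exists j : 'I_n, d j <> d' j /\ forall i, i <> j -> d i = d' i.

Definition in_Dn {U : Type} (D : set U) (n : nat) (d : 'I_n -> U) : Prop :=
  forall i, D (d i).

(* Main.v *)
Set Warnings "-notation-overridden,-ambiguous-paths,-notation-incompatible-prefix,-deprecated".
Require Import Defs.
From HB Require Import structures.
From mathcomp Require Import all_boot all_order all_algebra.
From mathcomp Require Import all_classical all_reals all_analysis.
From mathcomp Require Import lra ring.
Import Order.TTheory GRing.Theory Num.Theory.
Import numFieldNormedType.Exports.
Local Open Scope classical_set_scope.
Local Open Scope ring_scope.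
Lemma C01_eps {R : realType} (f : R -> R) : C01 f -> forall x, 0 <= x <= 1 ->
  forall e : R, 0 < e -> exists2 d : R, 0 < d &
    forall y, 0 <= y <= 1 -> `|x - y| < d -> `|f x - f y| < e.
Proof.
move=> [cf _] x x01 e e0.
have := (proj1 (subspace_continuousP _ f) cf x).
move=> /(_ _) H; have {}H := H ltac:(by rewrite /= in_itv).
move/cvgrPdist_lt : H => /(_ e e0).
rewrite near_withinE => /nbhs_ballP [d d0 Hd].
exists d => // y y01 xy; apply: Hd; last by rewrite /= in_itv.
by rewrite /ball /= .
Qed.

Lemma C01_bound {R : realType} (f : R -> R) : C01 f ->
  exists M : R, forall t, 0 <= t <= 1 -> `|f t| <= M.
Proof.
move=> [cf _].
have [c1 c1i H1] := EVT_max (@ler01 R) cf.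
have [c2 c2i H2] := EVT_min (@ler01 R) cf.
exists (`|f c1| + `|f c2|) => t t01.
have ti : t \in `[(0:R), 1] by rewrite in_itv.
have := H1 t ti; have := H2 t ti.
have a1 := ler_norm (f c1); have a2 := ler_norm (- f c2).
rewrite normrN in a2.
rewrite ler_norml => h2 h1; apply/andP; split.
  rewrite opprD. have := normr_ge0 (f c1). lra.
have := normr_ge0 (f c2). lra.
Qed.

Lemma supdist_ge {R : realType} (f g : R -> R) t : C01 f -> C01 g -> 0 <= t <= 1 ->
  `|f t - g t| <= supdist f g.
Proof.
move=> cf cg t01.
have [M1 H1] := C01_bound _ cf; have [M2 H2] := C01_bound _ cg.
apply: ub_le_sup; last by exists t => //; rewrite /= in_itv.
exists (M1 + M2) => _ [s s01 <-]; rewrite /= in_itv in s01.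
apply: le_trans (ler_normB _ _) _; exact: lerD (H1 _ s01) (H2 _ s01).
Qed.

Lemma supdist_le {R : realType} (f g : R -> R) (r : R) :
  (forall t, 0 <= t <= 1 -> `|f t - g t| <= r) -> supdist f g <= r.
Proof.
move=> H; apply: ge_sup; first by exists `|f 0 - g 0|, 0 => //; rewrite /= in_itv /= lexx ler01.
by move=> _ [s s01 <-]; apply: H; rewrite /= in_itv in s01.
Qed.

Lemma small_inv {R : realType} (d : R) : 0 < d ->
  exists M : nat, forall N, (M <= N)%N -> (N.+1%:R)^-1 < d.
Proof.
move=> d0; exists (Num.truncn d^-1) => N MN.
rewrite invf_plt ?posrE ?ltr0Sn //.
apply: lt_le_trans (truncnS_gt _) _.
by rewrite ler_nat ltnS.
Qed.

Lemma C01_unif {R : realType} (f : R -> R) : C01 f -> forall e : R, 0 < e ->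
  exists N : nat, forall s t, 0 <= s <= 1 -> 0 <= t <= 1 ->
    `|s - t| < (N.+1%:R)^-1 -> `|f s - f t| < e.
Proof.
move=> cf e e0.
have cK : compact (`[(0:R), 1]%classic) by exact: segment_compact.
have := (proj2 (near_covering_withinP _) (proj1 (compact_near_coveringP _) cK)).
move=> /(_ nat \oo (fun N s => forall t, 0 <= t <= 1 ->
    `|s - t| < (N.+1%:R)^-1 -> `|f s - f t| < e) _).
case.
- move=> x Kx; rewrite /= in_itv /= in Kx.
  have [d d0 Hd] := C01_eps _ cf x Kx (e / 2) ltac:(by rewrite divr_gt0).
  have [M HM] := small_inv (d / 2) ltac:(by rewrite divr_gt0).
  exists (ball x (d / 2), [set N | (M <= N)%N]).
    split; first by apply: nbhsx_ballx; rewrite divr_gt0.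
    by exists M.
  move=> [x' N] [/= bx' MN] Kx' t t01 x't.
  rewrite /= in_itv /= in Kx'.
  have hN := HM N MN.
  move: bx'; rewrite /ball /= => bx'.
  have h1 := Hd x' Kx' ltac:(lra).
  have xt : `|x - t| < d.
    apply: le_lt_trans (ler_distD x' _ _) _.
    rewrite [d](splitr d); apply: ltrD; first done; exact: lt_trans x't hN.
  have h2 := Hd t t01 xt.
  apply: le_lt_trans (ler_distD (f x) _ _) _.
  rewrite distrC; lra.
- move=> M0 _ HN; exists M0 => s t s01 t01; apply: (HN M0 (leqnn _)) => //.
Qed.


Lemma Rk_borel_open {R : realType} k (B : set 'rV[R]_k) : open B -> Rk_borel B.
Proof. by move=> oB; apply: sub_sigma_algebra. Qed.

Lemma Rk_borel_preimage {R : realType} a b (phi : 'rV[R]_a -> 'rV[R]_b)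
  (B : set 'rV[R]_b) : continuous phi -> Rk_borel B -> Rk_borel (phi @^-1` B).
Proof.
move=> cphi; apply: (@smallest_sub _ _ _ [set B | Rk_borel (phi @^-1` B)]).
- split.
  + by rewrite /= preimage_set0; exact: sigma_algebra0.
  + move=> A HA /=.
    have -> : phi @^-1` (setT `\` A) = setT `\` (phi @^-1` A).
      by apply/seteqP; split => x /=.
    exact: sigma_algebraCD.
  + by move=> F HF; rewrite /= preimage_bigcup; exact: sigma_algebra_bigcup.
- move=> A oA; apply: sub_sigma_algebra => /=.
  by apply: open_comp => // x _; exact: cphi.
Qed.

Lemma Rk_borel_le {R : realType} k (phi : 'rV[R]_k -> R) (c : R) :
  continuous phi -> Rk_borel [set v | phi v <= c].
Proof.
move=> cphi.
have -> : [set v | phi v <= c] = setT `\` (phi @^-1` [set y | c < y]).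
  apply/seteqP; split => v /=.
    by move=> h; split => //; apply/negP; rewrite -leNgt.
  by case=> _ /negP; rewrite -leNgt.
apply: sigma_algebraCD; apply: Rk_borel_open.
by apply: open_comp => [x _|]; [exact: cphi | exact: open_gt].
Qed.

Definition selr {R : realType} {k k' : nat} (r : 'I_k -> 'I_k') (v : 'rV[R]_k') : 'rV[R]_k :=
  \row_i v ord0 (r i).

Lemma selr_continuous {R : realType} k k' (r : 'I_k -> 'I_k') :
  continuous (@selr R k k' r).
Proof.
move=> v A /nbhs_ballP [e e0 HA]; apply/nbhs_ballP; exists e => // w [_ Hw].
apply: HA; split => // i j; rewrite !mxE; exact: Hw.
Qed.

Lemma proj_at_selr {R : realType} k k' (t : 'I_k -> R) (t' : 'I_k' -> R)
  (r : 'I_k -> 'I_k') : (forall i, t i = t' (r i)) ->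
  forall f, proj_at t f = selr r (proj_at t' f).
Proof.
move=> h f; apply/matrixP => i j; rewrite !mxE h; congr (f (t' _)).
Qed.


Section sig.
Lemma sig_sub {T : Type} {D : set T} {G : set (set T)} :
  (forall A, G A -> A `<=` D) -> forall A, <<s D, G>> A -> A `<=` D.
Proof.
move=> HG A HA; apply: (@smallest_sub _ _ _ [set A | A `<=` D]) HA.
- split => //.
  + by move=> A0 _; exact: subDsetl.
  + by move=> F HF x [n _ Fx]; exact: (HF n).
- exact: HG.
Qed.
End sig.

Lemma sig_D {T : Type} (D : set T) (G : set (set T)) : <<s D, G>> D.
Proof. by have := @sigma_algebraCD _ D G _ (@sigma_algebra0 _ D G); rewrite setD0. Qed.

Lemma sig_U {T : Type} (D : set T) (G : set (set T)) A B :
  <<s D, G>> A -> <<s D, G>> B -> <<s D, G>> (A `|` B).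
Proof.
move=> hA hB; rewrite -bigcup2E; apply: sigma_algebra_bigcup => -[|[|n]] //=.
exact: sigma_algebra0.
Qed.

Lemma sig_I {T : Type} (D : set T) (G : set (set T)) A B :
  (forall A, G A -> A `<=` D) ->
  <<s D, G>> A -> <<s D, G>> B -> <<s D, G>> (A `&` B).
Proof.
move=> HG hA hB.
have sA := sig_sub HG _ hA; have sB := sig_sub HG _ hB.
have -> : A `&` B = D `\` ((D `\` A) `|` (D `\` B)).
  apply/seteqP; split => x /=.
    by move=> [Ax Bx]; split; [exact: sA | move=> [[_ /(_ Ax)]|[_ /(_ Bx)]]].
  move=> [Dx /not_orP [/not_andP [//|/contrapT Ax] /not_andP [//|/contrapT Bx]]].
  by [].
apply: sigma_algebraCD; apply: sig_U; exact: sigma_algebraCD.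
Qed.

Lemma sig_Dif {T : Type} (D : set T) (G : set (set T)) A B :
  (forall A, G A -> A `<=` D) ->
  <<s D, G>> A -> <<s D, G>> B -> <<s D, G>> (A `\` B).
Proof.
move=> HG hA hB.
have -> : A `\` B = A `&` (D `\` B).
  apply/seteqP; split => x /=; last by case=> ? [].
  by case=> Ax Bx; split => //; split => //; exact: (sig_sub HG _ hA).
by apply: sig_I => //; exact: sigma_algebraCD.
Qed.

Lemma sig_bigcap {T : Type} (D : set T) (G : set (set T)) (F : (set T)^nat) :
  (forall n, <<s D, G>> (F n)) -> <<s D, G>> (D `&` \bigcap_n F n).
Proof.
move=> hF.
have -> : D `&` \bigcap_n F n = D `\` \bigcup_n (D `\` F n).
  apply/seteqP; split => x /=.
    by move=> [Dx Fx]; split => // -[n _ [_ /(_ (Fx n I))]].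
  move=> [Dx H]; split => // n _; apply: contrapT => nF; apply: H.
  by exists n.
apply: sigma_algebraCD; apply: sigma_algebra_bigcup => n.
exact: sigma_algebraCD.
Qed.

Definition cyl {R : realType} : set (set (R -> R)) :=
  [set A | exists k (t : 'I_k -> R) (B : set 'rV[R]_k),
    [/\ (0 < k)%N, (forall i, 0 <= t i <= 1), Rk_borel B &
        A = C01 `&` (proj_at t @^-1` B)]].

Lemma cyl_sub {R : realType} (A : set (R -> R)) : cyl A -> A `<=` C01.
Proof. by move=> [k [t [B [_ _ _ ->]]]] x []. Qed.

Lemma C01_borel_sub {R : realType} (A : set (R -> R)) : C01_borel A -> A `<=` C01.
Proof. by apply: sig_sub => A0 []. Qed.

Lemma cyl_borel {R : realType} (A : set (R -> R)) : cyl A -> C01_borel A.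
Proof.
move=> [k [t [B [k0 t01 hB ->]]]].
apply: (@smallest_sub _ _ _ [set B | C01_borel (C01 `&` (proj_at t @^-1` B))]) hB.
- split => /=.
  + by rewrite preimage_set0 setI0; exact: sigma_algebra0.
  + move=> A0 HA.
    have -> : C01 `&` proj_at t @^-1` (setT `\` A0) =
              C01 `\` (C01 `&` proj_at t @^-1` A0).
      by apply/seteqP; split => x /=; [move=> [? [_ ?]]; split => // -[]|move=> [? /not_andP [//|?]]].
    exact: sigma_algebraCD.
  + move=> F HF; rewrite preimage_bigcup setI_bigcupr.
    exact: sigma_algebra_bigcup.
- move=> O oO; apply: sub_sigma_algebra; split; first by move=> x [].
  move=> f [Cf Of].
  have := oO _ Of; rewrite /interior => /nbhs_ballP [e e0 He].
  exists e => // g Cg fg; split => //; apply: He; split => // i j.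
  rewrite /ball /= !mxE.
  by apply: le_lt_trans fg; apply: supdist_ge => //.
Qed.


Lemma cyl_ineq {R : realType} {dO : measure_display} {Omega : measurableType dO}
  (P : probability Omega R) (Xd Xd' : Omega -> R -> R)
  (XC : forall w, C01 (Xd w)) (XC' : forall w, C01 (Xd' w)) (eps delta : R)
  (H : forall k (t : 'I_k -> R), (1 <= k)%N -> (forall i, 0 <= t i <= 1) ->
     (forall i j : 'I_k, (i < j)%N -> t i < t j) -> forall B, Rk_borel B ->
     (P ((proj_at t \o Xd) @^-1` B)
        <= (expR eps)%:E * P ((proj_at t \o Xd') @^-1` B) + delta%:E)%E) :
  forall A, cyl A ->
  (P (Xd @^-1` A) <= (expR eps)%:E * P (Xd' @^-1` A) + delta%:E)%E.
Proof.
move=> A [k [t [B [k0 t01 hB ->]]]].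
have pre X : (forall w, C01 (X w)) ->
    X @^-1` (C01 `&` proj_at t @^-1` B) = (proj_at t \o X) @^-1` B.
  by move=> XC0; apply/seteqP; split => w /=; [case | split].
rewrite (pre _ _ XC) (pre _ _ XC').
pose s := sort <=%O (undup [seq t i | i <- enum 'I_k]).
have mem_s i : t i \in s.
  by rewrite mem_sort mem_undup; apply: map_f; rewrite mem_enum.
have memP x : x \in s -> exists i, x = t i.
  rewrite mem_sort mem_undup => /mapP [i _ ->]; by exists i.
have Hi i : (index (t i) s < size s)%N by rewrite index_mem.
pose r i := Ordinal (Hi i).
pose t' (i : 'I_(size s)) := nth 0 s i.
have tt' i : t i = t' (r i) by rewrite /t' /= nth_index.
rewrite (_ : proj_at t \o Xd = selr r \o (proj_at t' \o Xd)); last first.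
  by apply: funext => w /=; apply: proj_at_selr.
rewrite (_ : proj_at t \o Xd' = selr r \o (proj_at t' \o Xd')); last first.
  by apply: funext => w /=; apply: proj_at_selr.
apply: (H (size s) t' _ _ _ (selr r @^-1` B)).
- exact: leq_ltn_trans (leq0n _) (Hi (Ordinal k0)).
- move=> i; have [j ->] := memP (t' i) (mem_nth _ (ltn_ord i)).
  exact: t01.
- move=> i j ij.
  have ss : sorted <%O s by rewrite sort_lt_sorted undup_uniq.
  by apply: (sorted_ltn_nth lt_trans 0 ss) => //; rewrite inE.
- by apply: Rk_borel_preimage => //; exact: selr_continuous.
Qed.


Lemma cyl_compl {R : realType} (A : set (R -> R)) : cyl A -> cyl (C01 `\` A).
Proof.
move=> [k [t [B [k0 t01 hB ->]]]]; exists k, t, (setT `\` B); split => //.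
  exact: sigma_algebraCD.
apply/seteqP; split => f /=.
  by move=> [Cf /not_andP [//|nB]]; split => //.
by move=> [Cf [_ nB]]; split => // -[].
Qed.

Lemma cyl_set0 {R : realType} : cyl (@set0 (R -> R)).
Proof.
exists 1%N, (fun _ => 0), set0; split => //.
- by move=> _; rewrite lexx ler01.
- exact: sigma_algebra0.
- by rewrite preimage_set0 setI0.
Qed.

Lemma cyl_union {R : realType} (A A' : set (R -> R)) :
  cyl A -> cyl A' -> cyl (A `|` A').
Proof.
move=> [k [t [B [k0 t01 hB ->]]]] [k' [t' [B' [k0' t01' hB' ->]]]].
pose T i := match @fintype.split k k' i with inl a => t a | inr b => t' b end.
exists (k + k')%N, T,
  (selr (@lshift k k') @^-1` B `|` selr (@rshift k k') @^-1` B'); split.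
- by rewrite addn_gt0 k0.
- by move=> i; rewrite /T; case: fintype.split.
- by apply: sig_U; apply: Rk_borel_preimage => //; exact: selr_continuous.
have e1 f : proj_at t f = selr (@lshift k k') (proj_at T f).
  apply: proj_at_selr => i; rewrite /T.
  by have := unsplitK (inl i : 'I_k + 'I_k'); rewrite /= => ->.
have e2 f : proj_at t' f = selr (@rshift k k') (proj_at T f).
  apply: proj_at_selr => i; rewrite /T.
  by have := unsplitK (inr i : 'I_k + 'I_k'); rewrite /= => ->.
apply/seteqP; split => f /=.
  by case=> -[Cf Bf]; split => //; [left|right]; rewrite -?e1 -?e2.
by case=> Cf [Bf|Bf]; [left|right]; split => //; rewrite ?e1 ?e2.
Qed.


Definition pr {R : realType} {dO : measure_display} {Omega : measurableType dO}
  (P : probability Omega R) (X : Omega -> R -> R) (A : set (R -> R)) : R :=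
  fine (P (X @^-1` A)).

Lemma pr_E {R : realType} {dO : measure_display} {Omega : measurableType dO}
  (P : probability Omega R) (X : Omega -> R -> R) A :
  measurable (X @^-1` A) -> P (X @^-1` A) = (pr P X A)%:E.
Proof.
move=> mA; rewrite /pr fineK // ge0_fin_numE ?measure_ge0 //.
by apply: le_lt_trans (probability_le1 P mA) _; exact: ltey.
Qed.

Lemma pr_ge0 {R : realType} {dO : measure_display} {Omega : measurableType dO}
  (P : probability Omega R) (X : Omega -> R -> R) A : 0 <= pr P X A.
Proof. by rewrite /pr fine_ge0 // measure_ge0. Qed.

Lemma pr_mono {R : realType} {dO : measure_display} {Omega : measurableType dO}
  (P : probability Omega R) (X : Omega -> R -> R) A B :
  measurable (X @^-1` A) -> measurable (X @^-1` B) -> A `<=` B ->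
  pr P X A <= pr P X B.
Proof.
move=> mA mB AB; rewrite -lee_fin -!pr_E //.
by apply: le_measure; rewrite ?inE //; exact: preimage_subset.
Qed.

Lemma pr_U {R : realType} {dO : measure_display} {Omega : measurableType dO}
  (P : probability Omega R) (X : Omega -> R -> R) A B :
  measurable (X @^-1` A) -> measurable (X @^-1` B) ->
  pr P X (A `|` B) <= pr P X A + pr P X B.
Proof.
move=> mA mB; rewrite -lee_fin EFinD -!pr_E //; last first.
  by rewrite preimage_setU; exact: measurableU.
by rewrite preimage_setU; exact: measureU2.
Qed.

Lemma pr_cont {R : realType} {dO : measure_display} {Omega : measurableType dO}
  (P : probability Omega R) (X : Omega -> R -> R) (F : (set (R -> R))^nat) :
  (forall n, measurable (X @^-1` F n)) -> (forall n m, (n <= m)%N -> F m `<=` F n) ->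
  \bigcap_n F n = set0 ->
  forall e : R, 0 < e -> exists N0, forall N, (N0 <= N)%N -> pr P X (F N) < e.
Proof.
move=> mF dF F0 e e0.
have h0 : (P (X @^-1` F 0%N) < +oo)%E.
  by apply: le_lt_trans (probability_le1 P (mF 0%N)) _; exact: ltey.
have h1 : measurable (\bigcap_n (X @^-1` F n)).
  by rewrite -preimage_bigcap F0 preimage_set0; exact: measurable0.
have h2 : nonincreasing_seq (fun n => X @^-1` F n).
  by move=> n m nm; apply/subsetPset; apply: preimage_subset; exact: dF.
have := @nonincreasing_cvg_mu _ _ R P (fun n => X @^-1` F n) h0 mF h1 h2.
rewrite -preimage_bigcap F0 preimage_set0 measure0 => /fine_cvg.
move=> /cvgr_lt /(_ e e0) [N0 _ HN]; exists N0 => N NN.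
exact: (HN N NN).
Qed.


Lemma borelHG {R : realType} : forall A : set (R -> R), C01_open A -> A `<=` C01.
Proof. by move=> A []. Qed.

Lemma borel_U {R : realType} {A B : set (R -> R)} :
  C01_borel A -> C01_borel B -> C01_borel (A `|` B).
Proof. exact: sig_U. Qed.

Lemma borel_D {R : realType} {A B : set (R -> R)} :
  C01_borel A -> C01_borel B -> C01_borel (A `\` B).
Proof. exact: sig_Dif borelHG. Qed.

Fixpoint finU {T : Type} (A : nat -> set T) (N : nat) : set T :=
  match N with 0 => set0 | S n => finU A n `|` A n end.

Lemma finU_sub {T : Type} (A : nat -> set T) N : finU A N `<=` \bigcup_n A n.
Proof.
elim: N => [|N IH] x /=; first by [].
by case=> [/IH //|Ax]; exists N.
Qed.

Lemma finU_mono {T : Type} (A : nat -> set T) N M : (N <= M)%N -> finU A N `<=` finU A M.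
Proof.
move=> NM; elim: M NM => [|M IH]; first by rewrite leqn0 => /eqP ->.
rewrite leq_eqVlt => /orP [/eqP -> //|]; rewrite ltnS => /IH h x /h /=; by left.
Qed.

Lemma finU_cover {T : Type} (A : nat -> set T) x : (\bigcup_n A n) x -> exists N, finU A N x.
Proof. by case=> n _ Ax; exists n.+1; right. Qed.

Section approx.
Context {R : realType} {dO : measure_display} {Omega : measurableType dO}
  (P : probability Omega R) (Xd Xd' : Omega -> R -> R)
  (mX : forall A, C01_borel A -> measurable (Xd @^-1` A))
  (mX' : forall A, C01_borel A -> measurable (Xd' @^-1` A)).

Definition mm (S : set (R -> R)) := pr P Xd S + pr P Xd' S.

Lemma mm_ge0 S : 0 <= mm S.
Proof. by rewrite /mm addr_ge0 // pr_ge0. Qed.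

Lemma mm_mono A B : C01_borel A -> C01_borel B -> A `<=` B -> mm A <= mm B.
Proof. by move=> hA hB AB; rewrite /mm lerD // pr_mono //; auto. Qed.

Lemma mm_U A B : C01_borel A -> C01_borel B -> mm (A `|` B) <= mm A + mm B.
Proof.
move=> hA hB; rewrite /mm.
have := pr_U P Xd A B (mX _ hA) (mX _ hB); have := pr_U P Xd' A B (mX' _ hA) (mX' _ hB); lra.
Qed.

Lemma mm_set0 : mm set0 = 0.
Proof. by rewrite /mm /pr !preimage_set0 measure0 addr0. Qed.

Definition approx (A : set (R -> R)) := C01_borel A /\
  forall e : R, 0 < e -> exists2 C, cyl C & mm (A `\` C) + mm (C `\` A) < e.

Lemma approx_cyl A : cyl A -> approx A.
Proof.
move=> cA; split; first exact: cyl_borel.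
by move=> e e0; exists A => //; rewrite setDv mm_set0 addr0.
Qed.

Lemma approx_fin (A : nat -> set (R -> R)) : (forall n, approx (A n)) ->
  forall N, approx (finU A N).
Proof.
move=> hA; elim=> [|N [bU IH]]; first by apply: approx_cyl; exact: cyl_set0.
have bA := (hA N).1.
split; first exact: borel_U.
move=> e e0.
have [C1 c1 h1] := IH (e / 2) ltac:(by rewrite divr_gt0).
have [C2 c2 h2] := (hA N).2 (e / 2) ltac:(by rewrite divr_gt0).
exists (C1 `|` C2); first exact: cyl_union.
have b1 := cyl_borel _ c1; have b2 := cyl_borel _ c2.
have d1 := borel_D bU b1; have d2 := borel_D bA b2.
have d3 := borel_D b1 bU; have d4 := borel_D b2 bA.
have s1 : mm ((finU A N `|` A N) `\` (C1 `|` C2)) <=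
          mm (finU A N `\` C1) + mm (A N `\` C2).
  apply: (le_trans _ (mm_U _ _ d1 d2)).
  apply: mm_mono; [by apply: borel_D; apply: borel_U|
                   by apply: borel_U|].
  by move=> x [[Ux|Ax] /not_orP [n1 n2]]; [left|right].
have s2 : mm ((C1 `|` C2) `\` (finU A N `|` A N)) <=
          mm (C1 `\` finU A N) + mm (C2 `\` A N).
  apply: (le_trans _ (mm_U _ _ d3 d4)).
  apply: mm_mono; [by apply: borel_D; apply: borel_U|
                   by apply: borel_U|].
  by move=> x [[Ux|Ax] /not_orP [n1 n2]]; [left|right].
rewrite /=; lra.
Qed.


Lemma approx_compl A : approx A -> approx (C01 `\` A).
Proof.
move=> [bA hA]; split; first exact: sigma_algebraCD.
move=> e e0; have [C cC hC] := hA e e0.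
exists (C01 `\` C); first exact: cyl_compl.
have bC := cyl_borel _ cC.
have sA := C01_borel_sub _ bA.
have b1 : C01_borel (C01 `\` A) by exact: sigma_algebraCD.
have b2 : C01_borel (C01 `\` C) by exact: sigma_algebraCD.
have l1 : mm ((C01 `\` A) `\` (C01 `\` C)) <= mm (C `\` A).
  apply: mm_mono; [exact: borel_D|exact: borel_D|].
  move=> x [[Cx nA] /not_andP [//|/contrapT xC]]; by split.
have l2 : mm ((C01 `\` C) `\` (C01 `\` A)) <= mm (A `\` C).
  apply: mm_mono; [exact: borel_D|exact: borel_D|].
  move=> x [[Cx nC] /not_andP [//|/contrapT xA]]; by split.
lra.
Qed.

Lemma approx_set0 : approx set0.
Proof. by apply: approx_cyl; exact: cyl_set0. Qed.

Lemma approx_bigcup (A : nat -> set (R -> R)) : (forall n, approx (A n)) ->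
  approx (\bigcup_n A n).
Proof.
move=> hA.
have bA n : C01_borel (A n) := (hA n).1.
have bU : C01_borel (\bigcup_n A n) by exact: sigma_algebra_bigcup.
have bF N : C01_borel (finU A N) := (approx_fin _ hA N).1.
split => // e e0.
pose F N := \bigcup_n A n `\` finU A N.
have bFF N : C01_borel (F N) by exact: borel_D.
have decF n m : (n <= m)%N -> F m `<=` F n.
  by move=> nm x [Ux nU]; split => // h; apply: nU; exact: (finU_mono _ _ _ nm).
have capF : \bigcap_n F n = set0.
  apply/seteqP; split => x // Fx.
  have [N UN] := finU_cover _ _ (Fx 0%N I).1.
  by have [_] := Fx N I.
have e4 : 0 < e / 4 by rewrite divr_gt0.
have [N1 H1] := pr_cont P Xd F (fun n => mX _ (bFF n)) decF capF _ e4.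
have [N2 H2] := pr_cont P Xd' F (fun n => mX' _ (bFF n)) decF capF _ e4.
pose N := maxn N1 N2.
have hN1 := H1 N (leq_maxl _ _); have hN2 := H2 N (leq_maxr _ _).
have [C cC hC] := (approx_fin _ hA N).2 (e / 2) ltac:(by rewrite divr_gt0).
exists C => //.
have bC := cyl_borel _ cC.
have l1 : mm (\bigcup_n A n `\` C) <= mm (F N) + mm (finU A N `\` C).
  apply: (le_trans _ (mm_U _ _ (bFF N) (borel_D (bF N) bC))).
  apply: mm_mono; [exact: borel_D|apply: borel_U => //; exact: borel_D|].
  move=> x [Ux nC]; have [UNx|nUN] := pselect (finU A N x).
    by right.
  by left.
have l2 : mm (C `\` \bigcup_n A n) <= mm (C `\` finU A N).
  apply: mm_mono; [exact: borel_D|exact: borel_D|].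
  by move=> x [Cx nU]; split => // h; apply: nU; exact: (finU_sub _ _ _ h).
have : mm (F N) < e / 2 by rewrite /mm; lra.
lra.
Qed.

Lemma approx_sigma : sigma_algebra C01 approx.
Proof.
split; [exact: approx_set0|exact: approx_compl|exact: approx_bigcup].
Qed.

End approx.


Lemma ptcond_cyl {R : realType} (x c r : R) : 0 <= x <= 1 ->
  cyl (C01 `&` [set g | `|g x - c| <= r]).
Proof.
move=> x01.
exists 1%N, (fun _ => x), [set v | `|v ord0 ord0 - c| <= r]; split => //.
  apply: Rk_borel_le => v.
  apply: (continuous_comp (f := fun v : 'rV[R]_1 => v ord0 ord0 - c) (g := Num.norm)).
    apply: continuousB; [exact: coord_continuous | exact: cst_continuous].
  exact: norm_continuous.
by apply/seteqP; split => g /= [Cg H]; split => //; move: H; rewrite /proj_at mxE.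
Qed.

Lemma twocond_cyl {R : realType} (x y r : R) : 0 <= x <= 1 -> 0 <= y <= 1 ->
  cyl (C01 `&` [set g | `|g x - g y| <= r]).
Proof.
move=> x01 y01.
exists 2%N, (fun i : 'I_2 => if i == ord0 then x else y),
  [set v | `|v ord0 ord0 - v ord0 ord_max| <= r]; split => //.
  by move=> i; case: ifP.
  apply: Rk_borel_le => v.
  apply: (continuous_comp (f := fun v : 'rV[R]_2 => v ord0 ord0 - v ord0 ord_max) (g := Num.norm)).
    apply: continuousB; exact: coord_continuous.
  exact: norm_continuous.
by apply/seteqP; split => g /= [Cg H]; split => //; move: H; rewrite /proj_at !mxE.
Qed.

Definition cond2 {R : realType} (N m : nat) (g : R -> R) :=
  forall D j1 j2 : nat, (0 < D)%N -> (j1 <= D)%N -> (j2 <= D)%N ->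
  `|(j1%:R / D%:R : R) - j2%:R / D%:R| < N.+1%:R^-1 ->
  `|g (j1%:R / D%:R) - g (j2%:R / D%:R)| <= m.+1%:R^-1.

Lemma trunc_bounds {R : realType} (t : R) (D : nat) : 0 <= t <= 1 -> (0 < D)%N ->
  [/\ (Num.truncn (t * D%:R) <= D)%N,
      (Num.truncn (t * D%:R))%:R / D%:R <= t &
      t < (Num.truncn (t * D%:R))%:R / D%:R + D%:R^-1].
Proof.
move=> /andP [t0 t1] D0.
have D0' : 0 < D%:R :> R by rewrite ltr0n.
have h1 := truncnS_gt (t * D%:R).
have h2 : (Num.truncn (t * D%:R))%:R <= t * D%:R by rewrite truncn_le mulr_ge0.
split.
- rewrite truncn_le_nat; apply: le_lt_trans (_ : t * D%:R <= D%:R) _.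
    by rewrite ler_piMl.
  by rewrite ltr_nat.
- by rewrite ler_pdivrMr.
- rewrite -[X in _ + X]mul1r -mulrDl ltr_pdivlMr //; move: h1; rewrite -natr1; lra.
Qed.

Lemma grid01 {R : realType} (j D : nat) : (0 < D)%N -> (j <= D)%N ->
  0 <= (j%:R / D%:R : R) <= 1.
Proof.
move=> D0 jD; rewrite divr_ge0 //= ler_pdivrMr ?ltr0n // mul1r ler_nat //.
Qed.

Lemma near_grid {R : realType} (g : R -> R) N m (t : R) : C01 g -> cond2 N m g ->
  0 <= t <= 1 ->
  (Num.truncn (t * N.+1%:R) <= N.+1)%N /\
  `|g t - g ((Num.truncn (t * N.+1%:R))%:R / N.+1%:R)| <= m.+1%:R^-1.
Proof.
move=> Cg cg t01.
have [iN xi_le lt_xi] := trunc_bounds _ _ t01 (ltn0Sn N).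
split => //.
set i := Num.truncn (t * N.+1%:R) in iN xi_le lt_xi *.
apply/ler_addgt0Pr => eta eta0.
have [d d0 Hd] := C01_eps _ Cg t t01 eta eta0.
have [K HK] := small_inv _ d0.
have hK := HK K (leqnn _).
pose D := (N.+1 * K.+1)%N.
have D0 : (0 < D)%N by rewrite muln_gt0.
have [jD a_le lt_a] := trunc_bounds _ _ t01 D0.
set j := Num.truncn (t * D%:R) in jD a_le lt_a *.
have xiE : i%:R / N.+1%:R = (i * K.+1)%:R / D%:R :> R.
  rewrite /D !natrM; field.
  by rewrite !(addrC 1) !natr1 !pnatr_eq0.
have iD : (i * K.+1 <= D)%N by rewrite /D leq_mul2r iN orbT.
have invD : D%:R^-1 <= K.+1%:R^-1 :> R.
  rewrite lef_pV2 ?posrE ?ltr0n // ?muln_gt0 //.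
  by rewrite ler_nat /D leq_pmull.
have invDN : D%:R^-1 <= N.+1%:R^-1 :> R.
  rewrite lef_pV2 ?posrE ?ltr0n // ?muln_gt0 //.
  by rewrite ler_nat /D leq_pmulr.
clearbody i j D.
have ta : `|t - j%:R / D%:R| < d.
  rewrite ger0_norm ?subr_ge0 // ltrBlDl; apply: (lt_le_trans lt_a); rewrite lerD2l; exact: ltW (le_lt_trans invD hK).
have h1 := Hd _ (grid01 _ _ D0 jD) ta.
have h2 : `|g (j%:R / D%:R) - g ((i * K.+1)%:R / D%:R)| <= m.+1%:R^-1.
  apply: cg => //.
  rewrite -xiE; rewrite ltr_norml; move: lt_a a_le xi_le lt_xi invDN; move: (j%:R / D%:R : R) (i%:R / N.+1%:R : R) (D%:R^-1 : R) (N.+1%:R^-1 : R) => a b c e *; apply/andP; split; lra.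
rewrite xiE; apply: le_trans (ler_distD (g (j%:R / D%:R)) _ _) _.
rewrite addrC; apply: lerD => //; exact: ltW.
Qed.


Definition cond1 {R : realType} (N m : nat) (zs : seq int) (g : R -> R) :=
  forall i, (i <= N.+1)%N ->
  `|g (i%:R / N.+1%:R) - (nth 0 zs i)%:~R / m.+1%:R| <= m.+1%:R^-1.

Definition Sset {R : realType} (N m : nat) (zs : seq int) : set (R -> R) :=
  C01 `&` [set g | cond1 N m zs g /\ cond2 N m g].

Lemma Sset_close {R : realType} N m zs (f g : R -> R) :
  Sset N m zs f -> Sset N m zs g -> forall t : R, 0 <= t <= 1 ->
  `|f t - g t| <= 4 * m.+1%:R^-1.
Proof.
move=> [Cf [c1f c2f]] [Cg [c1g c2g]] t t01.
have [iN hf] := near_grid _ _ _ _ Cf c2f t01.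
have [_ hg] := near_grid _ _ _ _ Cg c2g t01.
have h1 := c1f _ iN; have h2 := c1g _ iN.
move: hf hg h1 h2.
set xi := (_ %:R / N.+1%:R).
set q := ((nth 0 zs _)%:~R / _).
move=> hf hg h1 h2.
have e1 : `|f t - g t| <= `|f t - f xi| + `|f xi - q| + `|g xi - q| + `|g t - g xi|.
  have -> : f t - g t = (f t - f xi) + (f xi - q) - (g xi - q) - (g t - g xi).
    by ring.
  apply: le_trans (ler_normB _ _) _; rewrite lerD2r.
  apply: le_trans (ler_normB _ _) _; rewrite lerD2r.
  exact: ler_normD.
apply: le_trans e1 _.
move: hf hg h1 h2; move: (m.+1%:R^-1 : R) => r; lra.
Qed.

Lemma Sset_mem {R : realType} (f : R -> R) m : C01 f ->
  exists N zs, Sset N m zs f.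
Proof.
move=> Cf.
have r0 : 0 < m.+1%:R^-1 :> R by rewrite invr_gt0 ltr0n.
have [N HN] := C01_unif _ Cf _ r0.
exists N, [seq Num.floor (f (i%:R / N.+1%:R) * m.+1%:R) | i <- iota 0 N.+2].
split => //; split.
- move=> i iN.
  rewrite (nth_map 0%N); last by rewrite size_iota.
  rewrite nth_iota // add0n.
  set y := f _.
  have m0 : 0 < m.+1%:R :> R by rewrite ltr0n.
  have h1 := floor_le (y * m.+1%:R).
  have h2 := floorD1_gt (y * m.+1%:R).
  rewrite intrD in h2.
  move: (Num.floor (y * m.+1%:R)) h1 h2 => z h1 h2.
  have e1 : z%:~R / m.+1%:R <= y by rewrite ler_pdivrMr.
  have e2 : y < z%:~R / m.+1%:R + m.+1%:R^-1.
    by rewrite -[X in _ + X]mul1r -mulrDl ltr_pdivlMr.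
  rewrite ler_norml; apply/andP; split.
    move: e1 e2; move: (z%:~R / m.+1%:R : R) (m.+1%:R^-1 : R) => a b; lra.
  move: e1 e2; move: (z%:~R / m.+1%:R : R) (m.+1%:R^-1 : R) => a b; lra.
- move=> D j1 j2 D0 j1D j2D hj.
  apply: ltW; apply: HN => //; exact: grid01.
Qed.

Lemma Sset_sig {R : realType} N m zs : <<s C01, @cyl R>> (Sset N m zs).
Proof.
pose F1 (i : nat) : set (R -> R) := if (i <= N.+1)%N then
  C01 `&` [set g | `|g (i%:R / N.+1%:R) - (nth 0 zs i)%:~R / m.+1%:R| <= m.+1%:R^-1]
  else C01.
pose F2 (n : nat) : set (R -> R) := match @unpickle (nat * nat * nat)%type n with
  | Some (D, j1, j2) => if [&& (0 < D)%N, (j1 <= D)%N, (j2 <= D)%N &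
         (`|(j1%:R / D%:R : R) - j2%:R / D%:R| < N.+1%:R^-1)] then
      C01 `&` [set g | `|g (j1%:R / D%:R) - g (j2%:R / D%:R)| <= m.+1%:R^-1]
      else C01
  | None => C01 end.
have -> : Sset N m zs = (C01 `&` \bigcap_i F1 i) `&` (C01 `&` \bigcap_n F2 n).
  apply/seteqP; split => g.
    move=> [Cg [c1 c2]]; split; split => // n _.
      by rewrite /F1; case: ifP => // iN; split => //; exact: c1.
    rewrite /F2; case: (unpickle n) => [[[D j1] j2]|] //.
    by case: ifP => // /and4P [D0 j1D j2D h]; split => //; exact: c2.
  move=> [[Cg H1] [_ H2]]; split => //; split.
    move=> i iN; have := H1 i I; rewrite /F1 iN; by case.
  move=> D j1 j2 D0 j1D j2D h; have := H2 (pickle (D, j1, j2)) I.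
  by rewrite /F2 pickleK D0 j1D j2D h /=; case.
apply: sig_I; first exact: cyl_sub.
- apply: sig_bigcap => i; rewrite /F1; case: ifP => iN; last exact: sig_D.
  apply: sub_sigma_algebra; apply: ptcond_cyl; exact: grid01.
- apply: sig_bigcap => n; rewrite /F2; case: (unpickle n) => [[[D j1] j2]|];
    last exact: sig_D.
  case: ifP => [/and4P [D0 j1D j2D h]|_]; last exact: sig_D.
  by apply: sub_sigma_algebra; apply: twocond_cyl; exact: grid01.
Qed.

Lemma open_sig {R : realType} (A : set (R -> R)) : C01_open A -> <<s C01, @cyl R>> A.
Proof.
move=> [AC oA].
pose H (n : nat) : set (R -> R) := match @unpickle (nat * nat * seq int)%type n with
  | Some (N, m, zs) => if pselect (Sset N m zs `<=` A) then Sset N m zs else set0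
  | None => set0 end.
have -> : A = \bigcup_n H n.
  apply/seteqP; split => [f Af|f [n _]]; last first.
    rewrite /H; case: (unpickle n) => [[[N m] zs]|] //.
    by case: pselect => // HS /HS.
  have [e e0 He] := oA f Af.
  have [m Hm] := small_inv (e / 4) ltac:(by rewrite divr_gt0).
  have hm := Hm m (leqnn _).
  have [N [zs Sf]] := Sset_mem _ m (AC _ Af).
  have sub : Sset N m zs `<=` A.
    move=> g Sg; apply: He; first exact: Sg.1.
    apply: le_lt_trans (_ : 4 * m.+1%:R^-1 < e).
      apply: supdist_le => t t01; exact: (Sset_close _ _ _ _ _ Sf Sg t t01).
    move: hm; move: (m.+1%:R^-1 : R) => r; lra.
  exists (pickle (N, m, zs)) => //.
  by rewrite /H pickleK; case: pselect.
apply: sigma_algebra_bigcup => n; rewrite /H.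
case: (unpickle n) => [[[N m] zs]|]; last exact: sigma_algebra0.
case: pselect => HS; [exact: Sset_sig|exact: sigma_algebra0].
Qed.


Theorem mainTheorem2 (R : realType) (U : Type) (D : set U) (n : nat)
  (hn : (1 <= n)%N)
  (dO : measure_display) (Omega : measurableType dO)
  (P : probability Omega R)
  (X : ('I_n -> U) -> Omega -> (R -> R))
  (XC : forall d w, C01 (X d w))
  (Xmeas : forall d A, C01_borel A -> measurable (X d @^-1` A))
  (eps delta : R) (heps : 0 <= eps) (hdelta0 : 0 <= delta) (hdelta1 : delta <= 1)
  (hfin : forall (k : nat) (t : 'I_k -> R), (1 <= k)%N ->
     (forall i, 0 <= t i <= 1) ->
     (forall i j : 'I_k, (i < j)%N -> t i < t j) ->
     forall d d', in_Dn D d -> in_Dn D d' -> neighbours d d' ->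
     forall B, Rk_borel B ->
       (P ((proj_at t \o X d) @^-1` B)
          <= (expR eps)%:E * P ((proj_at t \o X d') @^-1` B) + delta%:E)%E) :
  forall d d', in_Dn D d -> in_Dn D d' -> neighbours d d' ->
  forall A, C01_borel A ->
    (P (X d @^-1` A) <= (expR eps)%:E * P (X d' @^-1` A) + delta%:E)%E.
Proof.
move=> d d' Dd Dd' ndd A bA.
have mX := Xmeas d; have mX' := Xmeas d'.
have hcyl := cyl_ineq P (X d) (X d') (XC d) (XC d') eps delta (fun k t k0 t01 tinc B hB =>
  hfin k t k0 t01 tinc d d' Dd Dd' ndd B hB).
have sig1 : C01_borel `<=` <<s C01, @cyl R>>.
  apply: smallest_sub; first exact: smallest_sigma_algebra.
  by move=> O oO; exact: open_sig.
have sig2 : <<s C01, @cyl R>> `<=` approx P (X d) (X d').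
  apply: smallest_sub; first exact: approx_sigma.
  by move=> C cC; exact: approx_cyl.
have [_ apx] := sig2 _ (sig1 _ bA).
rewrite (pr_E P (X d) _ (mX _ bA)) (pr_E P (X d') _ (mX' _ bA)) -EFinM -EFinD lee_fin.
set E := expR eps.
have E0 : 0 < E by rewrite /E expR_gt0.
apply/ler_addgt0Pr => eta eta0.
have e0 : 0 < eta / (E + 1) by rewrite divr_gt0 // addr_gt0.
have [C cC hC] := apx _ e0.
have bC := cyl_borel _ cC.
have hC' := hcyl C cC.
rewrite (pr_E P (X d) _ (mX _ bC)) (pr_E P (X d') _ (mX' _ bC)) -EFinM -EFinD lee_fin in hC'.
have bAC := borel_D bA bC; have bCA := borel_D bC bA.
have l1 : pr P (X d) A <= pr P (X d) C + pr P (X d) (A `\` C).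
  apply: le_trans (pr_U P (X d) C (A `\` C) (mX _ bC) (mX _ bAC)).
  apply: pr_mono; [exact: mX|apply: mX; exact: borel_U|].
  by move=> x Ax; have [Cx|nCx] := pselect (C x); [left|right].
have l2 : pr P (X d') C <= pr P (X d') A + pr P (X d') (C `\` A).
  apply: le_trans (pr_U P (X d') A (C `\` A) (mX' _ bA) (mX' _ bCA)).
  apply: pr_mono; [exact: mX'|apply: mX'; exact: borel_U|].
  by move=> x Cx; have [Ax|nAx] := pselect (A x); [left|right].
have g1 := pr_ge0 P (X d) (A `\` C); have g2 := pr_ge0 P (X d') (A `\` C).
have g3 := pr_ge0 P (X d) (C `\` A); have g4 := pr_ge0 P (X d') (C `\` A).
move: hC; rewrite /mm => hC.
have l3 : E * pr P (X d') (C `\` A) <= E * (eta / (E + 1)).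
  apply: ler_wpM2l; [exact: ltW|lra].
have l4 : E * pr P (X d') C <= E * pr P (X d') A + E * pr P (X d') (C `\` A).
  by rewrite -mulrDr; apply: ler_wpM2l; [exact: ltW|exact: l2].
have l5 : E * (eta / (E + 1)) + eta / (E + 1) = eta.
  field; rewrite gt_eqF // addr_gt0 //.
move: l1 l2 l3 l4 l5 hC' hC g1 g2 g3 g4.
move: (E * (eta / (E + 1))) (eta / (E + 1)) (E * pr P (X d') C)
  (E * pr P (X d') A) (E * pr P (X d') (C `\` A)) => a b c e f.
lra.
Qed.
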